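(* Let $\mathcal{C}$ be a hereditary class of graphs that has bounded linear clique-width and is $2$-well-quasi-ordered. Then there exists an MSO-interpretation $I$ from finite words to graphs such that $\mathcal{C}\subseteq \mathrm{Im}(I)\subseteq \mathord{\downarrow}\mathcal{C}$, where $\mathord{\downarrow}\mathcal{C}$ denotes the hereditary closure of $\mathcal{C}$.
   Context: Graphs are finite, simple and undirected; $G$ is an induced subgraph of $H$ if there is an injective map $h$ with $\{h(u),h(v)\}\in E(H)$ iff $\{u,v\}\in E(G)$. A class is hereditary if closed under induced subgraphs; the hereditary closure of a class is the class of all induced subgraphs of its members. An MSO-interpretation from words over a finite alphabet $\Sigma$ to graphs is a triple $I=(\varphi_{\mathrm{edge}}(x,y),\varphi_{\mathrm{dom}}(x),\varphi_\Delta)$ of MSO formulas over words (with letter predicates and the order on positions), $\varphi_\Delta$ a sentence. For a word $w$, $I(w)$ is the graph with vertices the positions $i$ of $w$ with $w\models\varphi_{\mathrm{dom}}(i)$ and edges $\{i,j\}$ for $i<j$ with $w\models\varphi_{\mathrm{edge}}(i,j)$; $\mathrm{Im}(I)=\{I(w): w\in\Sigma^*, w\models\varphi_\Delta\}$. A class $\mathcal{C}$ has bounded linear clique-width if $\mathcal{C}\subseteq\mathrm{Im}(I)$ for some MSO-interpretation $I$. A class is $2$-well-quasi-ordered if for every set $X$ of size at most $2$, the class of graphs of $\mathcal{C}$ with vertices labelled by $X$ is well-quasi-ordered by label-preserving induced-subgraph embeddings. *)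

(* Defs.v *)
From mathcomp Require Import all_boot.
Set Implicit Arguments. Unset Strict Implicit. Unset Printing Implicit Defensive.

Record graph := Graph {
  vert : finType;
  adj : rel vert;
  adj_sym : symmetric adj;
  adj_irr : irreflexive adj }.

Definition induced (G H : graph) : Prop :=
  exists h : vert G -> vert H,
    injective h /\ forall u v : vert G, adj (h u) (h v) = adj u v.

Definition hereditary (C : graph -> Prop) : Prop :=
  forall G H : graph, induced G H -> C H -> C G.

Definition down (C : graph -> Prop) (G : graph) : Prop :=
  exists H, C H /\ induced G H.

Definition lgraph (X : Type) := {G : graph & vert G -> X}.

Definition lembed (X : Type) (A B : lgraph X) : Prop :=
  exists h : vert (projT1 A) -> vert (projT1 B),
    injective h /\
    (forall u v, adj (h u) (h v) = adj u v) /\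
    (forall u, projT2 B (h u) = projT2 A u).

Definition k_wqo (k : nat) (C : graph -> Prop) : Prop :=
  forall (X : finType), #|X| <= k ->
  forall f : nat -> lgraph X, (forall n, C (projT1 (f n))) ->
  exists i j, i < j /\ lembed (f i) (f j).

Inductive mso (S : Type) : Type :=
| MLetter of S & nat
| MLt of nat & nat
| MMem of nat & nat
| MNeg of mso S
| MOr of mso S & mso S
| MExFO of nat & mso S
| MExSO of nat & mso S.

Definition upd (T : Type) (v : nat -> T) (x : nat) (t : T) : nat -> T :=
  fun z => if z == x then t else v z.

Fixpoint sat (S : Type) (w : seq S) (v1 : nat -> nat) (v2 : nat -> nat -> bool)
    (phi : mso S) : Prop :=
  match phi with
  | MLetter a x => onth w (v1 x) = Some a
  | MLt x y => v1 x < v1 y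
  | MMem x X => v2 X (v1 x)
  | MNeg p => ~ sat w v1 v2 p
  | MOr p q => sat w v1 v2 p \/ sat w v1 v2 q
  | MExFO x p => exists i, i < size w /\ sat w (upd v1 x i) v2 p
  | MExSO X p => exists P : nat -> bool, sat w v1 (upd v2 X P) p
  end.

Fixpoint scoped (S : Type) (fo so : pred nat) (phi : mso S) : bool :=
  match phi with
  | MLetter _ x => fo x
  | MLt x y => fo x && fo y
  | MMem x X => fo x && so X
  | MNeg p => scoped fo so p
  | MOr p q => scoped fo so p && scoped fo so q
  | MExFO x p => scoped [pred z | (z == x) || fo z] so p
  | MExSO X p => scoped fo [pred Z | (Z == X) || so Z] p
  end.

(** An MSO-interpretation (phi_edge(x,y), phi_dom(x), phi_Delta):
    x is variable 0, y is variable 1; phi_Delta is a sentence. *)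
Record interp (S : finType) := Interp {
  phi_edge : mso S;
  phi_dom : mso S;
  phi_delta : mso S;
  phi_edge_sc : scoped [pred z | z < 2] pred0 phi_edge;
  phi_dom_sc : scoped [pred z | z == 0] pred0 phi_dom;
  phi_delta_sc : scoped pred0 pred0 phi_delta }.

Definition val2 (i j : nat) : nat -> nat :=
  fun z => if z == 0 then i else if z == 1 then j else 0.

Definition noset : nat -> nat -> bool := fun _ _ => false.

Definition in_dom (S : finType) (I : interp S) (w : seq S) (i : nat) : Prop :=
  i < size w /\ sat w (val2 i 0) noset (phi_dom I).

Definition in_edge (S : finType) (I : interp S) (w : seq S) (i j : nat) : Prop :=
  (i < j /\ sat w (val2 i j) noset (phi_edge I)) \/
  (j < i /\ sat w (val2 j i) noset (phi_edge I)).

Definition iso_image (S : finType) (I : interp S) (w : seq S) (G : graph) : Prop :=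
  exists f : vert G -> nat,
    injective f /\
    (forall v, in_dom I w (f v)) /\
    (forall i, in_dom I w i -> exists v, f v = i) /\
    (forall u v, adj u v <-> in_edge I w (f u) (f v)).

Definition in_Im (S : finType) (I : interp S) (G : graph) : Prop :=
  exists w : seq S, sat w (fun _ => 0) noset (phi_delta I) /\ iso_image I w G.

Definition bounded_lcw (C : graph -> Prop) : Prop :=
  exists (S : finType) (I : interp S), forall G, C G -> in_Im I G.

(* Main.v *)
Require Import Defs.
From mathcomp Require Import all_boot zify.
From Stdlib Require Import Classical FunctionalExtensionality ClassicalEpsilon.
Set Implicit Arguments. Unset Strict Implicit. Unset Printing Implicit Defensive.

Fixpoint rename (S : Type) (r : nat -> nat) (phi : mso S) : mso S :=
  match phi with
  | MLetter a x => MLetter a (r x)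
  | MLt x y => @MLt S (r x) (r y)
  | MMem x X => @MMem S (r x) X
  | MNeg p => MNeg (rename r p)
  | MOr p q => MOr (rename r p) (rename r q)
  | MExFO x p => MExFO (r x) (rename r p)
  | MExSO X p => MExSO X (rename r p)
  end.

Lemma upd_comp (T : Type) (r : nat -> nat) (v : nat -> T) x i :
  injective r -> (upd v (r x) i) \o r = upd (v \o r) x i.
Proof.
move=> rI; apply: functional_extensionality => z; rewrite /upd /= (inj_eq rI).
by [].
Qed.

Lemma sat_rename (S : Type) (w : seq S) r (rI : injective r) (phi : mso S) :
  forall v1 v2, sat w v1 v2 (rename r phi) <-> sat w (v1 \o r) v2 phi.
Proof.
elim: phi => /=.
- by [].
- by [].
- by [].
- by move=> p IH v1 v2; rewrite IH.
- by move=> p IHp q IHq v1 v2; rewrite IHp IHq.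
- move=> x p IH v1 v2; split=> -[i [Hi Hs]]; exists i; split=> //.
    by rewrite IH upd_comp in Hs.
  by rewrite IH upd_comp.
- move=> X p IH v1 v2; split=> -[P HP]; exists P; by [rewrite IH in HP | rewrite IH].
Qed.

Lemma sat_ext (S : Type) (w : seq S) (phi : mso S) :
  forall (fo so : pred nat) v1 v1' v2 v2', scoped fo so phi ->
  (forall z, fo z -> v1 z = v1' z) -> (forall X, so X -> v2 X = v2' X) ->
  sat w v1 v2 phi <-> sat w v1' v2' phi.
Proof.
elim: phi => /=.
- by move=> a x fo so v1 v1' v2 v2' Hs H1 H2; rewrite H1.
- by move=> x y fo so v1 v1' v2 v2' /andP[Hx Hy] H1 H2; rewrite H1 // H1.
- by move=> x X fo so v1 v1' v2 v2' /andP[Hx Hy] H1 H2; rewrite H1 // H2.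
- by move=> p IH fo so v1 v1' v2 v2' Hs H1 H2; rewrite (IH fo so v1 v1' v2 v2').
- move=> p IHp q IHq fo so v1 v1' v2 v2' /andP[Hp Hq] H1 H2.
  by rewrite (IHp fo so v1 v1' v2 v2') // (IHq fo so v1 v1' v2 v2').
- move=> x p IH fo so v1 v1' v2 v2' Hs H1 H2.
  have E : forall i, sat w (upd v1 x i) v2 p <-> sat w (upd v1' x i) v2' p.
    move=> i; apply: (IH _ so _ _ _ _ Hs) => // z /= /orP[/eqP->|Hz].
      by rewrite /upd eqxx.
    by rewrite /upd; case: eqP => // _; apply: H1.
  by split=> -[i [Hi HH]]; exists i; split=> //; apply/E.
- move=> X p IH fo so v1 v1' v2 v2' Hs H1 H2.
  have E : forall P, sat w v1 (upd v2 X P) p <-> sat w v1' (upd v2' X P) p.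
    move=> P; apply: (IH fo _ _ _ _ _ Hs) => // z /= /orP[/eqP->|Hz].
      by rewrite /upd eqxx.
    by rewrite /upd; case: eqP => // _; apply: H2.
  by split=> -[P HP]; exists P; apply/E.
Qed.

Lemma scoped_mono (S : Type) (phi : mso S) :
  forall (fo fo' so so' : pred nat), (forall z, fo z -> fo' z) ->
  (forall z, so z -> so' z) -> scoped fo so phi -> scoped fo' so' phi.
Proof.
elim: phi => /=.
- by move=> a x fo fo' so so' H1 H2; apply: H1.
- by move=> x y fo fo' so so' H1 H2 /andP[? ?]; rewrite !H1.
- by move=> x X fo fo' so so' H1 H2 /andP[? ?]; rewrite H1 // H2.
- by move=> p IH fo fo' so so' H1 H2; apply: IH.
- by move=> p IHp q IHq fo fo' so so' H1 H2 /andP[? ?]; rewrite (IHp fo fo' so so') // (IHq fo fo' so so').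
- move=> x p IH fo fo' so so' H1 H2; apply: IH => // z /= /orP[->//|/H1->]; by rewrite orbT.
- move=> X p IH fo fo' so so' H1 H2; apply: IH => // z /= /orP[->//|/H2->]; by rewrite orbT.
Qed.

Lemma scoped_rename (S : Type) r (phi : mso S) :
  forall (fo fo' so : pred nat), (forall z, fo z -> fo' (r z)) ->
  scoped fo so phi -> scoped fo' so (rename r phi).
Proof.
elim: phi => /=.
- by move=> a x fo fo' so H1; apply: H1.
- by move=> x y fo fo' so H1 /andP[? ?]; rewrite !H1.
- by move=> x X fo fo' so H1 /andP[? ?]; rewrite H1.
- by move=> p IH fo fo' so H1; apply: IH.
- by move=> p IHp q IHq fo fo' so H1 /andP[? ?]; rewrite (IHp fo fo' so) // (IHq fo fo' so).
- move=> x p IH fo fo' so H1; apply: IH => z /= /orP[/eqP->|/H1->]; by rewrite ?eqxx ?orbT.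
- move=> X p IH fo fo' so H1; apply: IH => z /= /H1 //.
Qed.

Definition MAnd (S : Type) (p q : mso S) := MNeg (MOr (MNeg p) (MNeg q)).
Definition MFalse (S : Type) : mso S := MExFO 0 (@MLt S 0 0).
Definition MTrue (S : Type) : mso S := MNeg (MFalse S).

Lemma sat_and S w v1 v2 (p q : mso S) : sat w v1 v2 (MAnd p q) <-> sat w v1 v2 p /\ sat w v1 v2 q.
Proof. rewrite /MAnd /=; tauto. Qed.
Lemma sat_true S w v1 v2 : sat w v1 v2 (MTrue S).
Proof. by move=> /= [i [_]]; rewrite /upd eqxx ltnn. Qed.

Fixpoint bigAnd S (F : nat -> mso S) k : mso S :=
  if k is k'.+1 then MAnd (F k') (bigAnd F k') else MTrue S.

Lemma sat_bigAnd S w v1 v2 (F : nat -> mso S) k :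
  sat w v1 v2 (bigAnd F k) <-> forall i, i < k -> sat w v1 v2 (F i).
Proof.
elim: k => [|k IH]; first by split=> // _; apply: sat_true.
change (sat w v1 v2 (MAnd (F k) (bigAnd F k)) <-> forall i, i < k.+1 -> sat w v1 v2 (F i)).
rewrite sat_and IH; split.
  by move=> [H1 H2] i; rewrite ltnS leq_eqVlt => /orP[/eqP->//|]; apply: H2.
by move=> H; split; [apply: H | move=> i Hi; apply: H; lia].
Qed.

Lemma scoped_bigAnd S (F : nat -> mso S) k fo so :
  (forall i, i < k -> scoped fo so (F i)) -> scoped fo so (bigAnd F k).
Proof.
elim: k => [|k IH] H /=; first by [].
by rewrite H // IH // => i Hi; apply: H; lia.
Qed.

Fixpoint exs S k (b : mso S) : mso S :=
  if k is k'.+1 then MExFO k' (exs k' b) else b.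

Lemma sat_exs S w v2 (b : mso S) k : forall v1,
  sat w v1 v2 (exs k b) <-> exists p : nat -> nat, (forall i, i < k -> p i < size w) /\
     sat w (fun z => if z < k then p z else v1 z) v2 b.
Proof.
elim: k => [|k IH] v1 /=.
  split; first by move=> H; exists v1; split=> //; rewrite (_ : (fun z => v1 z) = v1).
  by move=> [p [_ H]]; move: H; rewrite (_ : (fun z => v1 z) = v1).
split.
  move=> [i [Hi /IH [p [Hp H]]]]; exists (fun z => if z == k then i else p z); split.
    by move=> j Hj; case: eqP => // Hne; apply: Hp; lia.
  move: H; congr sat; apply: functional_extensionality => z; rewrite /upd.
  case: (ltngtP z k) => Hz.
  - have -> : z < k.+1 by lia. by [].
  - have -> : (z < k.+1) = false by lia. by [].
  - by rewrite Hz ltnSn.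
move=> [p [Hp H]]; exists (p k); split; first by apply: Hp.
apply/IH; exists p; split; first by move=> j Hj; apply: Hp; lia.
move: H; congr sat; apply: functional_extensionality => z; rewrite /upd.
case: (ltngtP z k) => Hz.
- by have -> : z < k.+1 by lia.
- by have -> : (z < k.+1) = false by lia.
- by rewrite Hz ltnSn.
Qed.

Lemma scoped_exs S k (b : mso S) : forall (fo so : pred nat),
  scoped [pred z | (z < k) || fo z] so b -> scoped fo so (exs k b).
Proof.
elim: k => [|k IH] fo so /= H.
  by move: H; apply: scoped_mono => // z /=.
apply: IH; move: H; apply: scoped_mono => // z /=.
case: (ltngtP z k) => Hz /=.
- by have -> : z < k.+1 by lia.
- have -> : (z < k.+1) = false by lia. by case: (fo z); rewrite ?orbT.
- by [].
Qed.

Definition rD n i z := if z == 0 then i else z + n.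
Definition rE n a b z := if z == 0 then a else if z == 1 then b else z + n.

Lemma rD_inj n i : i < n -> injective (rD n i).
Proof. move=> Hi x y; rewrite /rD; case: x => [|x]; case: y => [|y] /=; lia. Qed.
Lemma rE_inj n a b : a < n -> b < n -> a != b -> injective (rE n a b).
Proof. move=> Ha Hb /eqP Hab x y; rewrite /rE; case: x => [|[|x]]; case: y => [|[|y]] /=; lia. Qed.

Local Unset Implicit Arguments.
Section C.
Variables (S : finType) (I : interp S).

Definition domF n i := rename (rD n i) (phi_dom I).
Definition edgeF' n a b := rename (rE n a b) (phi_edge I).
Definition edgeF n i j : mso S :=
  MOr (MAnd (@MLt S i j) (edgeF' n i j)) (MAnd (@MLt S j i) (edgeF' n j i)).
Definition Anat n (A : {ffun 'I_n * 'I_n -> bool}) (i j : nat) : bool :=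
  match insub i, insub j with Some a, Some b => A (a, b) | _, _ => false end.
Definition pairF n (A : {ffun 'I_n * 'I_n -> bool}) i j : mso S :=
  if i == j then MTrue S else
  MAnd (MOr (@MLt S i j) (@MLt S j i))
       (if Anat n A i j then edgeF n i j else MNeg (edgeF n i j)).
Definition body n (A : {ffun 'I_n * 'I_n -> bool}) := MAnd (bigAnd (domF n) n) (bigAnd (fun i => bigAnd (pairF n A i) n) n).
Definition contains n (A : {ffun 'I_n * 'I_n -> bool}) := exs n (body n A).

Lemma sat_domF w v v2 n i : i < n ->
  sat w v v2 (domF n i) <-> sat w (val2 (v i) 0) noset (phi_dom I).
Proof.
move=> Hi; rewrite /domF sat_rename; last exact: rD_inj.
eapply sat_ext; [exact: (phi_dom_sc I) | | by []] => z /= /eqP ->.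
by rewrite /rD /val2.
Qed.

Lemma sat_edgeF' w v v2 n a b : a < n -> b < n -> a != b ->
  sat w v v2 (edgeF' n a b) <-> sat w (val2 (v a) (v b)) noset (phi_edge I).
Proof.
move=> Ha Hb Hab; rewrite /edgeF' sat_rename; last exact: rE_inj.
eapply sat_ext; [exact: (phi_edge_sc I) | | by []] => z /=.
by rewrite /rE /val2; case: z => [|[|z]].
Qed.

Lemma sat_edgeF w v v2 n i j : i < n -> j < n -> i != j ->
  sat w v v2 (edgeF n i j) <-> in_edge I w (v i) (v j).
Proof.
move=> Hi Hj Hij; rewrite /edgeF /in_edge.
change ((sat w v v2 (MAnd (@MLt S i j) (edgeF' n i j)) \/ sat w v v2 (MAnd (@MLt S j i) (edgeF' n j i))) <-> in_edge I w (v i) (v j)); rewrite /in_edge.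
rewrite !sat_and /= sat_edgeF' // sat_edgeF' // eq_sym //.
Qed.

Lemma scoped_contains n (A : {ffun 'I_n * 'I_n -> bool}) : scoped pred0 pred0 (contains n A).
Proof.
apply: scoped_exs; rewrite /body /=.
rewrite scoped_bigAnd ?scoped_bigAnd //.
- move=> i Hi; apply: scoped_bigAnd => j Hj; rewrite /pairF.
  case: eqP => // Hne /=; rewrite Hi Hj /=.
  have He : forall a b, a < n -> b < n -> a != b ->
    scoped [pred z | (z < n) || pred0 z] pred0 (edgeF n a b).
    move=> a b Ha Hb Hab /=; rewrite Ha Hb /=.
    by apply/andP; split; rewrite /edgeF';
      apply: (scoped_rename (fo := [pred z | z < 2])) (phi_edge_sc I) => z /=;
      rewrite /rE; case: z => [|[|z]] //= _; rewrite ?Ha ?Hb.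
  have Hij : i != j by apply/eqP.
  by case: (Anat n A i j); [exact: He | exact: (He i j Hi Hj Hij)].
- move=> i Hi; rewrite /domF.
  apply: (scoped_rename (fo := [pred z | z == 0])) (phi_dom_sc I) => z /= /eqP ->.
  by rewrite /rD /= Hi.
Qed.

Lemma sat_contains w v1 v2 n (A : {ffun 'I_n * 'I_n -> bool}) :
  sat w v1 v2 (contains n A) <->
  exists p : nat -> nat, (forall i, i < n -> in_dom I w (p i)) /\
    (forall i j, i < n -> j < n -> i != j ->
       p i != p j /\ (in_edge I w (p i) (p j) <-> Anat n A i j)).
Proof.
rewrite /contains sat_exs; split.
  move=> [p [Hs Hb]]; exists p.
  move: Hb; rewrite /body sat_and !sat_bigAnd => -[Hd Hp]; split.
    move=> i Hi; split; first exact: Hs.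
    by move: (Hd i Hi); rewrite sat_domF // Hi.
  move=> i j Hi Hj Hij; move: (Hp i Hi); rewrite sat_bigAnd => /(_ j Hj).
  rewrite /pairF (negbTE Hij) sat_and /=.
  set V := (fun z => if z < n then p z else v1 z).
  have Vi : V i = p i by rewrite /V Hi.
  have Vj : V j = p j by rewrite /V Hj.
  case: (Anat n A i j) => -[Hlt HH]; move: Hlt => /=; rewrite Hi Hj => Hlt.
    move: HH; rewrite sat_edgeF // Vi Vj => HH.
    split; [apply/eqP; lia | by split].
  have HH' : ~ sat w V v2 (edgeF n i j) := HH.
  move: HH'; rewrite sat_edgeF // Vi Vj => HH'.
  split; [apply/eqP; lia | split; [move=> H0; case: (HH' H0) | by []]].
move=> [p [Hd Hp]]; exists p; split; first by move=> i /Hd [].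
rewrite /body sat_and !sat_bigAnd; split.
  by move=> i Hi; rewrite sat_domF // Hi; case: (Hd i Hi).
move=> i Hi; rewrite sat_bigAnd => j Hj; rewrite /pairF.
case: eqP => [_|/eqP Hij]; first exact: sat_true.
have [Hne He] := Hp i j Hi Hj Hij.
rewrite sat_and /=; split; first by rewrite Hi Hj; move: Hne; case: ltngtP => //; lia.
case E: (Anat n A i j).
  by rewrite sat_edgeF //= Hi Hj; apply/He.
change (~ sat w (fun z => if z < n then p z else v1 z) v2 (edgeF n i j)). by rewrite sat_edgeF //= Hi Hj => /He; rewrite E.
Qed.
End C.
Set Implicit Arguments.

Lemma induced_refl G : induced G G.
Proof. by exists id; split. Qed.

Lemma induced_trans G H K : induced G H -> induced H K -> induced G K.
Proof.
move=> [h [hI hA]] [k [kI kA]]; exists (k \o h); split.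
  exact: inj_comp.
by move=> u v /=; rewrite kA hA.
Qed.

Definition minimal (C : graph -> Prop) H :=
  ~ C H /\ forall G, induced G H -> #|vert G| < #|vert H| -> C G.

Lemma ex_minimal C G : ~ C G -> exists H, minimal C H /\ induced H G.
Proof.
have : forall n G, #|vert G| <= n -> ~ C G -> exists H, minimal C H /\ induced H G.
  elim=> [|n IH] G' Hn HC.
    exists G'; split; last exact: induced_refl.
    split=> // G'' _; lia.
  case: (classic (minimal C G')) => Hm.
    by exists G'; split; last exact: induced_refl.
  have [G'' [Hi [Hl HG]]] : exists G'', induced G'' G' /\ #|vert G''| < #|vert G'| /\ ~ C G''.
    apply: NNPP => Hne; apply: Hm; split=> // G'' H1 H2.
    by apply: NNPP => H3; apply: Hne; exists G''.
  have [H [Hm' Hi']] := IH G'' ltac:(lia) HG.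
  by exists H; split=> //; apply: induced_trans Hi.
by move=> /(_ _ G (leqnn _)).
Qed.

Section Del.
Variables (H : graph) (v : vert H).
Definition dvert : finType := {u : vert H | u != v}.
Definition dadj : rel dvert := fun a b => adj (val a) (val b).
Lemma dadj_sym : symmetric dadj. Proof. by move=> a b; apply: adj_sym. Qed.
Lemma dadj_irr : irreflexive dadj. Proof. by move=> a; apply: adj_irr. Qed.
Definition del : graph := Graph dadj_sym dadj_irr.
Definition dlab (u : vert del) : bool := adj v (val u).
Definition ldel : lgraph bool := existT _ del dlab.

Lemma del_induced : induced del H.
Proof. by exists val; split=> //; apply: val_inj. Qed.

Lemma del_card : #|vert del| < #|vert H|.
Proof.
rewrite /= /dvert card_sig.
have := cardC1 v; rewrite /predC1.
have : 0 < #|vert H| by apply/card_gt0P; exists v.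
move=> H0 H1.
rewrite (_ : #|[pred x : vert H | x != v]| = #|vert H|.-1); first by rewrite ltn_predL.
by rewrite -H1; apply: eq_card => x; rewrite !inE.
Qed.
End Del.

Lemma bound C : hereditary C -> k_wqo 2 C ->
  exists N, forall H, minimal C H -> #|vert H| <= N.
Proof.
move=> Hh Hw; apply: NNPP => Hno.
have hq : forall N, exists q : {H : graph & vert H},
    minimal C (projT1 q) /\ N < #|vert (projT1 q)|.
  move=> N; apply: NNPP => Hn; apply: Hno; exists N => H Hm; apply: NNPP => Hl.
  have : 0 < #|vert H| by lia.
  move/card_gt0P => [v _]; apply: Hn; exists (existT _ H v); split => //=. by rewrite ltnNge; apply/negP.
pose g N := proj1_sig (constructive_indefinite_description _ (hq N)).
have gP N : minimal C (projT1 (g N)) /\ N < #|vert (projT1 (g N))|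
  := proj2_sig (constructive_indefinite_description _ (hq N)).
pose f := fix f k := if k is k'.+1 then g #|vert (projT1 (f k'))| else g 0.
have fS k : #|vert (projT1 (f k))| < #|vert (projT1 (f k.+1))| := (gP _).2.
have fmono i j : i < j -> #|vert (projT1 (f i))| < #|vert (projT1 (f j))|.
  elim: j => [//|j IH]; rewrite ltnS leq_eqVlt => /orP[/eqP->|/IH h].
    exact: fS.
  exact: ltn_trans h (fS j).
have fmin k : minimal C (projT1 (f k)) by case: k => [|k]; apply: (gP _).1.
pose lg k := ldel (projT2 (f k)).
have [i [j [Hij [h [hI [hA hL]]]]]] : exists i j, i < j /\ lembed (lg i) (lg j).
  apply: Hw; first by rewrite card_bool.
  move=> n; have [_ Hm] := fmin n; apply: Hm; [exact: del_induced | exact: del_card].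
pose ext (u : vert (projT1 (f i))) : vert (projT1 (f j)) :=
  match (insub u : option (dvert (projT2 (f i)))) with
  | Some s => val (h s) | None => projT2 (f j) end.
have Hind : induced (projT1 (f i)) (projT1 (f j)).
  exists ext; split.
    move=> u u'; rewrite /ext.
    case: insubP => [s Hs <-|/negPn/eqP->]; case: insubP => [s' Hs' <-|/negPn/eqP->] //.
    - by move/val_inj/hI->.
    - by move=> E; have := valP (h s); rewrite /= E eqxx.
    - by move=> E; have := valP (h s'); rewrite /= -E eqxx.
  move=> u u'; rewrite /ext.
  case: insubP => [s Hs <-|/negPn/eqP->]; case: insubP => [s' Hs' <-|/negPn/eqP->].
  - exact: hA.
  - by rewrite adj_sym [in RHS]adj_sym; exact: hL.
  - exact: hL.
  - by rewrite !adj_irr.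
have [Hnot _] := fmin i.
by apply: Hnot; have [_ Hm] := fmin j; apply: Hm => //; apply: fmono.
Qed.

Definition repr (S : Type) (psi : mso S) (R : seq S -> Prop) :=
  scoped pred0 pred0 psi /\ forall w, sat w (fun _ => 0) noset psi <-> R w.

Lemma repr_all (T : eqType) (S : Type) (L : seq T) (R : T -> seq S -> Prop) :
  (forall t, exists psi, repr psi (R t)) ->
  exists psi, repr psi (fun w => forall t, t \in L -> R t w).
Proof.
move=> HR; elim: L => [|t L [psi [Hs Hp]]].
  by exists (MTrue S); split=> // w; split=> // _; apply: sat_true.
have [phi [Hs' Hp']] := HR t.
exists (MAnd phi psi); split; first by rewrite /= Hs Hs'.
move=> w; rewrite sat_and Hp Hp'; split.
  by move=> [H1 H2] t'; rewrite inE => /orP[/eqP->//|]; apply: H2.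
by move=> H; split; [apply: H; rewrite inE eqxx | move=> t' Ht'; apply: H; rewrite inE Ht' orbT].
Qed.

Theorem lemma2p2 (C : graph -> Prop) :
  hereditary C -> bounded_lcw C -> k_wqo 2 C ->
  exists (S : finType) (I : interp S),
    (forall G, C G -> in_Im I G) /\ (forall G, in_Im I G -> down C G).
Proof.
move=> Hh [S [I HI]] Hw.
have [N HN] := bound Hh Hw.
pose P n (A : {ffun 'I_n * 'I_n -> bool}) := exists H : graph, ~ C H /\
  exists e : vert H -> 'I_n, injective e /\ forall u v, adj u v = A (e u, e v).
have [psi [psc pR]] : exists psi, repr psi (fun w => forall n, n \in iota 0 N.+1 ->
   forall A, A \in enum {ffun 'I_n * 'I_n -> bool} -> P n A ->
   ~ sat w (fun _ => 0) noset (contains _ I n A)).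
  apply: repr_all => n; apply: repr_all => A.
  case: (classic (P n A)) => HP.
    exists (MNeg (contains _ I n A)); split; first exact: (scoped_contains _ I n A).
    by move=> w; split; [move=> H0 _; exact: H0 | move=> H0; exact: H0 HP].
  by exists (MTrue S); split=> // w; split=> [_ HP'|_]; [by [] | apply: sat_true].
have dsc : scoped pred0 pred0 (MAnd (phi_delta I) psi) by rewrite /= psc phi_delta_sc.
exists S, (Interp (phi_edge_sc I) (phi_dom_sc I) dsc); split.
  move=> G HG; have [w [Hd [f [fI [fd [fs fe]]]]]] := HI G HG.
  exists w; split; last by exists f.
  change (sat w (fun _ => 0) noset (MAnd (phi_delta I) psi)).
  rewrite sat_and pR; split=> // n _ A _ [H [HnC [e [eI eA]]]] /sat_contains [p [pd pp]].
  have [q qP] : exists q : vert H -> vert G, forall u, f (q u) = p (e u).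
    by apply: (@fin_all_exists _ (fun _ => vert G) (fun u v => f v = p (e u))) => u; apply: fs; apply: pd.
  apply: HnC; apply: (Hh H G) HG; exists q; split.
    move=> u u' E.
    have E' : p (e u) = p (e u') by rewrite -!qP E.
    apply: eI; case: (eqVneq (e u) (e u')) => // Hne.
    have [Hd' _] := pp _ _ (ltn_ord (e u)) (ltn_ord (e u')) Hne.
    by rewrite E' eqxx in Hd'.
  move=> u u'; case: (eqVneq u u') => [<-|Hne]; first by rewrite !adj_irr.
  have Hne' : e u != e u' by apply: contra Hne => /eqP /eI ->.
  have [_ He] := pp _ _ (ltn_ord (e u)) (ltn_ord (e u')) Hne'.
  rewrite eA; apply/idP/idP.
    by move/fe; rewrite !qP => /He; rewrite /Anat !valK.
  by move=> HA; apply/fe; rewrite !qP; apply/He; rewrite /Anat !valK.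
move=> G [w [Hd [f [fI [fd [fs fe]]]]]].
exists G; split; last exact: induced_refl.
apply: NNPP => HG; have [H [Hm [h [hI hA]]]] := ex_minimal HG.
change (sat w (fun _ => 0) noset (MAnd (phi_delta I) psi)) in Hd.
move: Hd; rewrite sat_and pR => -[_ HR].
pose A := [ffun ij : 'I_#|vert H| * 'I_#|vert H| => adj (enum_val ij.1) (enum_val ij.2)].
apply: (HR #|vert H| _ A).
- by rewrite mem_iota /= add0n ltnS; apply: HN.
- by rewrite mem_enum.
- exists H; split; first exact: Hm.1.
  exists enum_rank; split; first exact: enum_rank_inj.
  by move=> u v; rewrite ffunE /= !enum_rankK.
apply/sat_contains.
exists (fun i => if (insub i : option 'I_#|vert H|) is Some a then f (h (enum_val a)) else 0).
split.
  move=> i Hi; case: insubP => [a _ _|]; first exact: fd.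
  by rewrite Hi.
move=> i j Hi Hj Hij.
case: insubP => [a _ Ha|]; last by rewrite Hi.
case: insubP => [b _ Hb|]; last by rewrite Hj.
have Hab : a != b by apply: contra Hij => /eqP Eab; rewrite -Ha -Hb Eab.
split.
  apply: contra Hab => /eqP /fI /hI /enum_val_inj ->; exact: eqxx.
rewrite -Ha -Hb /Anat !valK ffunE /= -hA; exact: (iff_sym (fe _ _)).
Qed.
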